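(* For all $n\ge3$ and $s\ge0$, $$\mathbf{Sf}_{n,3}(p,1)\big|_{p^s}=\binom{n-1}{s+2},$$ and for all $n\ge4$ and $s\ge0$, $$\mathbf{Sf}_{n,4}(p,1)\big|_{p^s}=(2^{s+1}-1)\binom{n-1}{s+3}.$$
   Context: $F_1(p,q)=q$, $F_2(p,q)=q^2$ and $F_m(p,q)=qF_{m-1}(p,q)+pF_{m-2}(p,q)$ for $m\ge3$. Let $(x)_{\downarrow_{F,p,q,0}}=1$ and $(x)_{\downarrow_{F,p,q,k}}=x(x-F_1(p,q))\cdots(x-F_{k-1}(p,q))$ for $k\ge1$. Define the polynomials $\mathbf{Sf}_{n,k}(p,q)$ for $0\le k\le n$ by $x^n=\sum_{k=0}^n\mathbf{Sf}_{n,k}(p,q)(x)_{\downarrow_{F,p,q,k}}$. $\mathbf{Sf}_{n,k}(p,1)$ is the specialization $q=1$, and $f|_{p^s}$ denotes the coefficient of $p^s$ in the polynomial $f$ in $p$. *)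

(* Defs.v *)
From mathcomp Require Import all_boot all_order all_algebra.
Set Implicit Arguments. Unset Strict Implicit. Unset Printing Implicit Defensive.
Import GRing.Theory.
Local Open Scope ring_scope.

Definition Rp := {poly int}.
(* Polynomials in q with coefficients in Z[p], i.e. Z[p][q]. *)
Definition Rpq := {poly {poly int}}.
(* Polynomials in x with coefficients in Z[p,q]. *)
Definition Rpqx := {poly {poly {poly int}}}.

Definition pvar : Rpq := ('X : {poly int})%:P.
Definition qvar : Rpq := 'X.

(* F_0 := 0 (convention, so that (x)_k = prod_{i<k} (x - F_i)),
   F_1 = q, F_2 = q^2, F_m = q F_{m-1} + p F_{m-2} for m >= 3. *)
Fixpoint Fpq (m : nat) : Rpq :=
  match m with
  | 0 => 0
  | 1 => qvar
  | m1.+1 => match m1 with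
             | 0 => qvar
             | 1 => qvar ^+ 2
             | m2.+1 => qvar * Fpq m1 + pvar * Fpq m2
             end
  end.

Definition ffall (k : nat) : Rpqx := \prod_(i < k) ('X - (Fpq i)%:P).

Definition is_Sf (Sf : nat -> nat -> Rpq) : Prop :=
  forall n : nat, ('X ^+ n : Rpqx) = \sum_(k < n.+1) (Sf n k)%:P * ffall k.

Definition at_q1 (f : Rpq) : Rp := f.[1].

(* Main.v *)
Require Import Defs.
From mathcomp Require Import all_boot all_order all_algebra.
From mathcomp Require Import ring zify.
Import GRing.Theory.
Local Open Scope ring_scope.

Lemma ffallS k : ffall k.+1 = ffall k * ('X - (Fpq k)%:P).
Proof. by rewrite /ffall big_ord_recr. Qed.

Lemma ffall_monic k : ffall k \is monic.
Proof. exact: monic_prod_XsubC. Qed.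

Lemma size_ffall k : size (ffall k) = k.+1.
Proof. by rewrite /ffall size_prod_XsubC /index_enum /= -enumT size_enum_ord. Qed.

Lemma coef_top (a : nat -> Rpq) m :
  (\sum_(k < m.+1) (a k)%:P * ffall k)`_m = a m.
Proof.
rewrite big_ord_recr /= coefD coef_sum big1 ?add0r.
  rewrite coefCM; have := monicP (ffall_monic m).
  by rewrite lead_coefE size_ffall /= => ->; rewrite mulr1.
move=> i _; rewrite coefCM nth_default ?mulr0 // size_ffall.
exact: ltn_ord.
Qed.

Lemma sum_ffall_inj m (a b : nat -> Rpq) :
  \sum_(k < m) (a k)%:P * ffall k = \sum_(k < m) (b k)%:P * ffall k ->
  forall k, (k < m)%N -> a k = b k.
Proof.
elim: m => [//|m IH] E k Hk.
have Em : a m = b m by rewrite -(coef_top a) -(coef_top b) E.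
move: E; rewrite !big_ord_recr /= Em => /addIr E.
move: Hk; rewrite ltnS leq_eqVlt => /orP[/eqP->//|]; exact: IH.
Qed.

Section Rec.
Variable Sf : nat -> nat -> Rpq.
Hypothesis HSf : is_Sf Sf.
Definition T n k : Rpq := if (k <= n)%N then Sf n k else 0.

Lemma T_sum n N : (n < N)%N -> ('X ^+ n : Rpqx) = \sum_(k < N) (T n k)%:P * ffall k.
Proof.
move=> HN; rewrite HSf.
rewrite -(subnKC HN) [RHS]big_split_ord /= [X in _ = _ + X]big1 ?addr0.
  by apply: eq_bigr => i _; rewrite /T -ltnS ltn_ord.
move=> i _; rewrite /T ifF ?polyC0 ?mul0r //; apply/negbTE; rewrite -ltnNge.
exact: leq_addr.
Qed.

Lemma T_rec n k : T n.+1 k = (if k is k'.+1 then T n k' else 0) + T n k * Fpq k.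
Proof.
have E : \sum_(k < n.+2) (T n.+1 k)%:P * ffall k =
  \sum_(k < n.+2) ((if (k : nat) is k'.+1 then T n k' else 0) + T n k * Fpq k)%:P * ffall k.
  rewrite -T_sum //.
  under eq_bigr do rewrite polyCD mulrDl.
  rewrite big_split /= big_ord_recl /= polyC0 mul0r add0r.
  have Tn : T n n.+1 = 0 by rewrite /T ltnn.
  rewrite [X in _ = _ + X]big_ord_recr Tn mul0r polyC0 mul0r Monoid.mulm1.
  rewrite exprSr (@T_sum n n.+1 (ltnSn n)) mulr_suml -big_split /=.
  apply: eq_bigr => i _; rewrite ffallS polyCM /bump /= add0n.
  by rewrite mulrBr mulrBr !mulrA [(T n i)%:P * ffall i * (Fpq i)%:P]mulrAC subrK.
case: (ltnP k n.+2) => Hk; first exact: (@sum_ffall_inj n.+2 (T n.+1)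
  (fun k => (if k is k'.+1 then T n k' else 0) + T n k * Fpq k) E k Hk).
case: k Hk => [//|k] Hk.
rewrite /T !ifF ?mul0r ?add0r //; apply/negbTE; rewrite -ltnNge //.
exact: ltnW.
Qed.

Lemma T00 : T 0 0 = 1.
Proof.
have := HSf 0; rewrite big_ord1 /ffall big_ord0 mulr1 expr0 -polyC1 => /polyC_inj.
by rewrite /T => <-.
Qed.

Lemma T0S k : T 0 k.+1 = 0.
Proof. by []. Qed.


Definition h n k : {poly int} := (T n k).[1].

Lemma h_rec n k : h n.+1 k = (if k is k'.+1 then h n k' else 0) + h n k * (Fpq k).[1].
Proof. by rewrite /h T_rec hornerD hornerM; case: k => [|k]; rewrite ?horner0. Qed.

Lemma hOS k : h 0 k.+1 = 0.
Proof. by rewrite /h T0S horner0. Qed.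

Lemma F1 : (Fpq 1).[1] = 1. Proof. by rewrite /= /qvar hornerX. Qed.
Lemma F2 : (Fpq 2).[1] = 1. Proof. by rewrite /= /qvar hornerXn expr1n. Qed.
Lemma F3 : (Fpq 3).[1] = 1 + 'X.
Proof. by rewrite /= /qvar /pvar !hornerE expr1n. Qed.
Lemma F4 : (Fpq 4).[1] = 1 + 'X + 'X.
Proof. by rewrite /= /qvar /pvar !hornerE ?expr1n /= !mulr1. Qed.

Lemma h0 n : h n 0 = (n == 0%N)%:R.
Proof.
case: n => [|n]; first by rewrite /h T00 hornerC.
by rewrite h_rec /= horner0 mulr0 add0r.
Qed.

Lemma h1 n : h n 1 = (0 < n)%N%:R.
Proof.
elim: n => [|n IH]; first by rewrite hOS.
by rewrite h_rec F1 mulr1 h0 IH; case: n {IH} => [|n] /=; rewrite ?addr0 ?add0r.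
Qed.

Lemma h2 n : h n 2 = (n.-1)%:R.
Proof.
elim: n => [|n IH]; first by rewrite hOS.
rewrite h_rec F2 mulr1 h1 IH; case: n {IH} => [|n] /=; first by rewrite addr0.
by rewrite -natrD.
Qed.

Lemma h3 n s : (h n 3)`_s = ('C(n.-1, s + 2))%:Z.
Proof.
elim: n s => [|n IH] s; first by rewrite hOS coef0 bin0n addn2.
rewrite h_rec F3 h2 mulrDr mulr1 !coefD coefMX !IH coefMn coef1.
case: s => [|s]; case: n {IH} => [|n] /=; rewrite ?mul0rn ?add0r ?addr0 ?bin0n //.
- rewrite natz add0n binS bin1; lia.
- by rewrite !addn2.
Qed.

Lemma h4 n s : (h n 4)`_s = ((2 ^ s.+1 - 1) * 'C(n.-1, s + 3))%:Z.
Proof.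
elim: n s => [|n IH] s; first by rewrite hOS coef0 bin0n addn3 muln0.
rewrite h_rec F4 !mulrDr mulr1 !coefD coefMX !IH h3.
case: n {IH} => [|m] /=.
  by rewrite !bin0n !addn2 !addn3 /= !muln0; case: (s == 0%N); rewrite ?addr0.
case: s => [|t] /=.
  rewrite !add0n binS /= !mul1n; lia.
have [Z EZ] : exists Z, (2 ^ t.+1 = Z.+1)%N.
  by exists (2 ^ t.+1).-1; rewrite prednK // expn_gt0.
rewrite !addSn binS expnS EZ.
have E1 : (2 * Z.+1 - 1 = (2 * Z).+1)%N by lia.
have E2 : (Z.+1 - 1 = Z)%N by lia.
rewrite -addnS E1 E2.
set A := 'C(m, t + 3); set B := 'C(m, (t + 3).+1).
rewrite -!PoszD; congr Posz; ring.
Qed.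

End Rec.

Theorem theorem13 (Sf : nat -> nat -> Rpq) (HSf : is_Sf Sf) :
  (forall n s : nat, (3 <= n)%N ->
     (at_q1 (Sf n 3%N))`_s = ('C(n.-1, s + 2))%:Z) /\
  (forall n s : nat, (4 <= n)%N ->
     (at_q1 (Sf n 4%N))`_s = ((2 ^ s.+1 - 1) * 'C(n.-1, s + 3))%:Z).
Proof.
split=> n s Hn.
  have -> : Sf n 3 = T Sf n 3 by rewrite /T Hn.
  exact: (@h3 Sf HSf n s).
have -> : Sf n 4 = T Sf n 4 by rewrite /T Hn.
exact: (@h4 Sf HSf n s).
Qed.
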